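(* Let $\xi\ge 0$. For every set $E\subset\mathbb{R}_+$, $$\mathrm{Dim}_H E=\inf\Big\{\rho>0:\ \sum_{n\ge -1}\widetilde{\nu}^n_{\rho,\xi}(E)<+\infty\Big\},$$ where for $\rho>0$ and $n\ge -1$, $$\widetilde{\nu}^n_{\rho,\xi}(E)=\inf\Big\{\sum_{i=1}^m\Big(\frac{\mathrm{diam}(I_i)}{2^n}\Big)^\rho\Big|\log_2\frac{\mathrm{diam}(I_i)}{2^n}\Big|^\xi:\ \{I_i\}_{i=1}^m\in\mathcal{I}_n(E)\Big\}.$$
   Context: Let $S_{-1}=[0,1/2)$ and $S_n=[2^{n-1},2^n)$ for $n\ge 0$. For $E\subset\mathbb{R}_+$ and $n\ge -1$, $\mathcal{I}_n(E)$ is the set of finite families $\{I_i\}_{i=1}^m$ of intervals $I_i=[x_i,y_i]$ with $x_i,y_i\in\mathbb{N}$, $y_i>x_i$, $I_i\subset S_n$, and $E\cap S_n\subset\bigcup_i I_i$; $\mathrm{diam}([a,b])=b-a$. For $\rho\ge0$, $\nu^n_\rho(E)=\inf\{\sum_{i=1}^m (\mathrm{diam}(I_i)/2^n)^\rho : \{I_i\}\in\mathcal{I}_n(E)\}$, and the macroscopic Hausdorff dimension is $\mathrm{Dim}_H E=\inf\{\rho>0:\sum_{n\ge-1}\nu^n_\rho(E)<\infty\}$. *)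

(* Defs.v *)
From HB Require Import structures.
From mathcomp Require Import all_boot all_order all_algebra.
From mathcomp Require Import all_classical all_reals all_analysis.
Set Implicit Arguments. Unset Strict Implicit. Unset Printing Implicit Defensive.
Import Order.TTheory GRing.Theory Num.Theory.
Local Open Scope classical_set_scope.
Local Open Scope ring_scope.

Section MacroDim.
Variable R : realType.

Definition shell (n : int) : set R :=
  if (n < 0)%R then `[0, 2^-1[%classic
  else `[(2:R) ^ (n - 1), (2:R) ^ n[%classic.

Definition nat_itv (p : nat * nat) : set R := `[p.1%:R, p.2%:R]%classic.

(* A finite family (seq of endpoint pairs) belongs to I_n(E). The empty family
   is allowed (m = 0). *)
Definition admissible (n : int) (E : set R) (s : seq (nat * nat)) : Prop :=
  (forall p, p \in s -> (p.1 < p.2)%N /\ nat_itv p `<=` shell n) /\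
  (E `&` shell n `<=` [set z | exists2 p, p \in s & nat_itv p z]).

Definition rel_diam (n : int) (p : nat * nat) : R :=
  (p.2 - p.1)%:R / (2:R) ^ n.

(* Infimum over I_n(E) of \sum_i g (diam(I_i)/2^n), as an extended real
   (inf of the empty set is +oo). *)
Definition cover_inf (g : R -> R) (n : int) (E : set R) : \bar R :=
  ereal_inf [set (\sum_(p <- s) g (rel_diam n p))%:E
            | s in admissible n E].

Definition nu (rho : R) (n : int) (E : set R) : \bar R :=
  cover_inf (fun t => t `^ rho) n E.

Definition log2 (x : R) : R := ln x / ln 2.

Definition nu_tilde (rho xi : R) (n : int) (E : set R) : \bar R :=
  cover_inf (fun t => t `^ rho * `|log2 t| `^ xi) n E.

Definition sum_shells (f : int -> \bar R) : \bar R :=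
  (\sum_(0 <= k <oo) f ((k%:Z) - 1)%R)%E.

Definition DimH (E : set R) : \bar R :=
  ereal_inf [set rho%:E | rho in [set rho : R |
     0 < rho /\ (sum_shells (fun n => nu rho n E) < +oo)%E]].

End MacroDim.

(* Main.v *)
Set Warnings "-notation-overridden,-ambiguous-paths,-notation-incompatible-prefix".
Require Import Defs.
From HB Require Import structures.
From mathcomp Require Import all_boot all_order all_algebra.
From mathcomp Require Import all_classical all_reals all_analysis.
From mathcomp Require Import lra ring.
Import Order.TTheory GRing.Theory Num.Theory.
Local Open Scope classical_set_scope.
Local Open Scope ring_scope.

Section H.
Variable R : realType.
Implicit Types t : R.

Lemma ln2_gt0 : 0 < ln (2:R).
Proof. by apply: ln_gt0; rewrite ltr1n. Qed.

Lemma log2_le t : 0 < t -> t <= 2^-1 -> 1 <= `|log2 t|.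
Proof.
move=> t0 th.
have h : ln t <= - ln (2:R).
  rewrite -lnV ?posrE //; rewrite ler_ln ?posrE //.
have l2 := ln2_gt0.
rewrite ler0_norm; last by rewrite /log2 pmulr_lle0 ?invr_gt0 //; lra.
rewrite /log2 -mulNr ler_pdivlMr //; lra.
Qed.

Lemma low_bound rho xi t : 0 <= xi -> 0 < t -> t <= 2^-1 ->
  t `^ rho <= t `^ rho * `|log2 t| `^ xi.
Proof.
move=> xi0 t0 th; rewrite ler_peMr ?powR_ge0 //.
have h1 := log2_le t t0 th.
rewrite /powR gt_eqF; last by lra.
rewrite -[1]expR0 ler_expR mulr_ge0 // ln_ge0 //.
Qed.

Definition Cst (eps xi : R) : R := expR (- xi * ln (eps / (xi + 1) * ln 2)).

Lemma Cst_gt0 eps xi : 0 < Cst eps xi.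
Proof. exact: expR_gt0. Qed.

Lemma up_bound rho eps xi t : 0 < eps -> 0 <= xi -> 0 < t -> t <= 2^-1 ->
  t `^ (rho + eps) * `|log2 t| `^ xi <= Cst eps xi * t `^ rho.
Proof.
move=> e0 xi0 t0 th.
rewrite powRD; last by rewrite (gt_eqF t0) implybT.
rewrite -mulrA mulrC ler_wpM2r ?powR_ge0 //.
have l2 := ln2_gt0.
have h1 := log2_le t t0 th.
set u := - ln t.
have u0 : 0 < u.
  rewrite /u oppr_gt0; apply: ln_lt0; rewrite t0 /=; apply: (le_lt_trans th); by rewrite invf_lt1 // ltr1n.
have hl : `|log2 t| = u / ln 2.
  rewrite ler0_norm; first by rewrite /log2 /u mulNr.
  rewrite /log2 pmulr_lle0 ?invr_gt0 //; rewrite -oppr_ge0 ltW //.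
set d := eps / (xi + 1).
have d0 : 0 < d by rewrite /d divr_gt0 //; lra.
have xd : xi * d <= eps.
  rewrite /d mulrA ler_pdivrMr; last by lra.
  nra.
have hL : ln (u / ln 2) <= d * u - ln (d * ln 2).
  have -> : u / ln 2 = (d * u) * (d * ln 2)^-1.
    by field; apply/andP; split; apply/lt0r_neq0 => //.
  have p1 : 0 < d * u by rewrite mulr_gt0.
  have p2 : 0 < d * ln 2 by rewrite mulr_gt0.
  rewrite lnM ?posrE ?invr_gt0 // lnV ?posrE //.
  have := ln_sublinear (mulr_gt0 d0 u0); lra.
rewrite /powR !gt_eqF //; last by rewrite (lt_le_trans _ h1).
rewrite -expRD /Cst ler_expR hl.
have -> : ln t = - u by rewrite /u opprK.
have : xi * ln (u / ln 2) <= xi * (d * u - ln (d * ln 2)) by rewrite ler_wpM2l.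
nra.
Qed.
Lemma adm_bound (n : int) (E : set R) s p : admissible n E s -> p \in s ->
  0 < rel_diam R n p /\ rel_diam R n p <= 2^-1.
Proof.
move=> [hs _] ps; have [hlt hsub] := hs p ps.
have h1 : @nat_itv R p p.1%:R by rewrite /nat_itv /= in_itv /= lexx ler_nat ltnW.
have h2 : @nat_itv R p p.2%:R by rewrite /nat_itv /= in_itv /= lexx ler_nat ltnW.
have s1 := hsub _ h1; have s2 := hsub _ h2.
move: s1 s2; rewrite /shell; case: ifPn => hn.
  rewrite /= !in_itv /= => _ /andP [_ c].
  exfalso; have : (1 <= p.2)%N by apply: leq_ltn_trans hlt.
  rewrite -(ler_nat R) => c2; have : (1:R) < 2^-1 by apply: (le_lt_trans c2).
  by rewrite invf_gt1 // ltNge ler1n.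
rewrite /= !in_itv /= => /andP [a1 _] /andP [_ b2].
have e2 : (2:R) ^ (n - 1) = (2:R) ^ n / 2.
  rewrite expfzDr; last by rewrite pnatr_eq0.
  by rewrite exprN1.
have pn : 0 < (2:R) ^ n by apply: exprz_gt0; rewrite ltr0n.
rewrite /rel_diam natrB; last exact: ltnW. split.
  by apply: divr_gt0 _ pn; rewrite subr_gt0 ltr_nat.
rewrite e2 in a1; rewrite (ler_pdivrMr _ _ pn).
move: a1 b2 pn; move: ((2:R) ^ n) (p.1%:R) (p.2%:R) => N x y.
timeout 20 lra.
Qed.

Arguments adm_bound {n E s p}.

Lemma cover_le (g h : R -> R) n (E : set R) :
  (forall t, 0 < t -> t <= 2^-1 -> g t <= h t) ->
  (cover_inf g n E <= cover_inf h n E)%E.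
Proof.
move=> H; rewrite /cover_inf; apply: le_ereal_inf_tmp => _ [s adm <-].
apply: ge_ereal_inf; exists (\sum_(p <- s) g (rel_diam R n p))%:E; first by exists s.
rewrite lee_fin [X in X <= _]big_seq [X in _ <= X]big_seq; apply: ler_sum => p ps.
by have [a b] := adm_bound adm ps; apply: H.
Qed.

Lemma cover_scale (g h : R -> R) C n (E : set R) : 0 < C ->
  (forall t, 0 < t -> t <= 2^-1 -> h t <= C * g t) ->
  (cover_inf h n E <= C%:E * cover_inf g n E)%E.
Proof.
move=> C0 H; rewrite /cover_inf -ereal_inf_pZl; last exact: C0.
apply: le_ereal_inf_tmp => _ [_ [s adm <-] <-].
apply: ge_ereal_inf; exists (\sum_(p <- s) h (rel_diam R n p))%:E; first by exists s.
rewrite -EFinM lee_fin mulr_sumr [X in X <= _]big_seq [X in _ <= X]big_seq.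
apply: ler_sum => p ps.
by have [a b] := adm_bound adm ps; apply: H.
Qed.

Lemma cover_ge0 (g : R -> R) n (E : set R) : (forall t, 0 <= g t) ->
  (0 <= cover_inf g n E)%E.
Proof.
move=> H; apply: le_ereal_inf_tmp => _ [s _ <-]; rewrite lee_fin.
by apply: sumr_ge0 => p _; apply: H.
Qed.

End H.

Theorem lemma3 (R : realType) (xi : R) (hxi : 0 <= xi) (E : set R)
  (hE : E `<=` `[0, +oo[%classic) :
  DimH E = ereal_inf [set rho%:E | rho in [set rho : R |
     0 < rho /\ (sum_shells (fun n => nu_tilde rho xi n E) < +oo)%E]].
Proof.
have step1 : forall rho : R, 0 < rho /\ (sum_shells (fun n => nu_tilde rho xi n E) < +oo)%E ->
    0 < rho /\ (sum_shells (fun n => nu rho n E) < +oo)%E.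
  move=> rho [r0 hs]; split; first exact: r0.
  apply: le_lt_trans hs; rewrite /sum_shells; apply: lee_nneseries.
    by move=> k _ _; apply: cover_ge0 => t; apply: powR_ge0.
  move=> k _; apply: cover_le => t t0 th; exact: low_bound.
have step2 : forall rho e : R, 0 < e ->
    0 < rho /\ (sum_shells (fun n => nu rho n E) < +oo)%E ->
    0 < rho + e /\ (sum_shells (fun n => nu_tilde (rho + e) xi n E) < +oo)%E.
  move=> rho e e0 [r0 hs]; split; first exact: addr_gt0.
  have C0 := @Cst_gt0 R e xi.
  apply: (@le_lt_trans _ _ ((@Cst R e xi)%:E * sum_shells (fun n => nu rho n E))%E).
    rewrite /sum_shells -nneseriesZl; last first.
      by move=> k _; apply: cover_ge0 => t; apply: powR_ge0.
    apply: lee_nneseries.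
      move=> k _ _; apply: cover_ge0 => t; apply: mulr_ge0; exact: powR_ge0.
    move=> k _; apply: cover_scale; first exact: C0.
    by move=> t t0 th; apply: up_bound.
  apply: lte_mul_pinfty => //; rewrite lee_fin; exact: ltW.
rewrite /DimH; apply/eqP; rewrite eq_le; apply/andP; split.
  apply: ereal_inf_le_tmp => _ [rho h <-]; exists rho => //; exact: step1.
apply: le_ereal_inf_tmp => _ [rho h <-].
apply/lee_addgt0Pr => e e0; apply: ereal_inf_lbound.
by exists (rho + e); [exact: step2 | rewrite EFinD].
Qed.
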